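(* Let $X_n=(\mathbb{C}^n,\|\cdot\|)$ be a symmetric Banach lattice and $J\subset\Lambda_T(m,n)$ an index set, where $m\le n$. Then $$\widehat{\boldsymbol{\lambda}}\big(\mathcal{P}_J(X_n)\big)\le e^m\Big(\frac{\varphi_{X_n'}(n)}{\varphi_{X_n'}(m)}\Big)^m.$$
   Context: A Banach lattice $X_n=(\mathbb{C}^n,\|\cdot\|)$ is a norm with $\|z\|\le\|w\|$ whenever $|z_k|\le|w_k|$ for all $k$; it is symmetric if $\|(z_{\sigma(k)})\|=\|z\|$ for every permutation $\sigma$. $X_n'$ is the Köthe dual ($\|x\|_{X_n'}=\sup\{\sum|x_ky_k|:\|y\|\le1\}$) and $\varphi_{X_n'}(k)=\|\sum_{j=1}^ke_j\|_{X_n'}$. $\Lambda_T(m,n)$ is the set of $\alpha\in\{0,1\}^n$ with $|\alpha|=m$. $c_{X_n}(\alpha)=1/\sup_{z\in B_{X_n}}|z^\alpha|$ ($B_{X_n}$ the open unit ball), and $\widehat{\boldsymbol{\lambda}}(\mathcal{P}_J(X_n))=\sup_{z\in B_{X_n}}\sum_{\alpha\in J}c_{X_n}(\alpha)|z^\alpha|$. *)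

(* Defs.v *)
From HB Require Import structures.
From mathcomp Require Import all_boot all_order all_algebra.
From mathcomp Require Import perm complex.
From mathcomp Require Import classical_sets reals sequences exp.
Set Implicit Arguments. Unset Strict Implicit. Unset Printing Implicit Defensive.
Import Order.TTheory GRing.Theory Num.Theory.
Local Open Scope ring_scope.
Local Open Scope classical_set_scope.

Section Defs.
Variables (R : realType) (n : nat).

Definition cmod (z : R[i]) : R := Num.sqrt (complex.Re z ^+ 2 + complex.Im z ^+ 2).

Definition is_norm (N : ('I_n -> R[i]) -> R) : Prop :=
  [/\ (forall z, N z = 0 -> forall k, z k = 0),
      (forall (a : R[i]) z, N (fun k => a * z k) = cmod a * N z) &
      (forall z w, N (fun k => z k + w k) <= N z + N w)].

Definition is_lattice_norm (N : ('I_n -> R[i]) -> R) : Prop :=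
  forall z w, (forall k, cmod (z k) <= cmod (w k)) -> N z <= N w.

Definition is_symmetric_norm (N : ('I_n -> R[i]) -> R) : Prop :=
  forall (s : {perm 'I_n}) z, N (fun k => z (s k)) = N z.

Definition kothe_norm (N : ('I_n -> R[i]) -> R) (x : 'I_n -> R[i]) : R :=
  sup [set r | exists y, N y <= 1 /\ r = \sum_k cmod (x k * y k)].

Definition phi_dual (N : ('I_n -> R[i]) -> R) (k : nat) : R :=
  kothe_norm N (fun j => if (j < k)%N then 1 else 0).

(* a multi-index alpha in {0,1}^n is encoded by its support A; z^alpha = prod_{k in A} z_k,
   and |alpha| = #|A| *)
Definition monom (A : {set 'I_n}) (z : 'I_n -> R[i]) : R[i] := \prod_(k in A) z k.

Definition cX (N : ('I_n -> R[i]) -> R) (A : {set 'I_n}) : R :=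
  1 / sup [set r | exists z, N z < 1 /\ r = cmod (monom A z)].

Definition lambda_hat (N : ('I_n -> R[i]) -> R) (J : {set {set 'I_n}}) : R :=
  sup [set r | exists z, N z < 1 /\ r = \sum_(A in J) cX N A * cmod (monom A z)].

End Defs.

(* Main.v *)
Require Import Defs.
From HB Require Import structures.
From mathcomp Require Import all_boot all_order all_algebra.
From mathcomp Require Import perm complex.
From mathcomp Require Import classical_sets reals sequences exp.
From mathcomp Require Import ring lra.
Set Implicit Arguments. Unset Strict Implicit. Unset Printing Implicit Defensive.
Import Order.TTheory GRing.Theory Num.Theory.
Local Open Scope ring_scope.

Section Cmod.
Variable R : realType.
Implicit Types (z w : R[i]) (r : R).
Definition rc r : R[i] := Complex r 0.

Lemma cmodE z : cmod z = Normc.normc z. Proof. by case: z. Qed.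
Lemma cmod_ge0 z : 0 <= cmod z. Proof. exact: sqrtr_ge0. Qed.
Lemma cmodM z w : cmod (z * w) = cmod z * cmod w.
Proof. by rewrite !cmodE Normc.normcM. Qed.
Lemma cmod0 : cmod (0 : R[i]) = 0. Proof. by rewrite cmodE Normc.normc0. Qed.
Lemma cmod1 : cmod (1 : R[i]) = 1. Proof. by rewrite cmodE Normc.normc1. Qed.
Lemma cmod_rc r : cmod (rc r) = `|r|.
Proof. by rewrite /cmod /= expr0n /= addr0 sqrtr_sqr. Qed.
Lemma rcM r s : rc (r * s) = rc r * rc s.
Proof. by rewrite /rc /GRing.mul /= /mulc /= !mulr0 !mul0r subr0 addr0. Qed.
Lemma cmod_prod (I : finType) (P : pred I) (F : I -> R[i]) :
  cmod (\prod_(i | P i) F i) = \prod_(i | P i) cmod (F i).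
Proof. by apply: (big_morph _ cmodM cmod1). Qed.
Lemma cmod_eq0 z : cmod z = 0 -> z = 0.
Proof. by rewrite cmodE => /Normc.eq0_normc. Qed.
End Cmod.

Section Norm.
Variables (R : realType) (n : nat) (N : ('I_n -> R[i]) -> R).
Hypotheses (hN : is_norm N) (hlat : is_lattice_norm N).

Lemma N_ext z w : (forall k, cmod (z k) = cmod (w k)) -> N z = N w.
Proof. by move=> H; apply/eqP; rewrite eq_le !hlat // => k; rewrite H. Qed.

Lemma N_hom (a : R[i]) z : N (fun k => a * z k) = cmod a * N z.
Proof. by case: hN. Qed.

Lemma N_tri z w : N (fun k => z k + w k) <= N z + N w.
Proof. by case: hN. Qed.

Lemma N0 : N (fun _ => 0) = 0.
Proof.
have := N_hom 0 (fun _ => 0); rewrite cmod0 [0 * N _]mul0r => <-.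
by apply: N_ext => k; rewrite mul0r.
Qed.

Lemma cmodN1 : cmod (-1 : R[i]) = 1.
Proof. by rewrite cmodE normcN -cmodE cmod1. Qed.

Lemma N_ge0 z : 0 <= N z.
Proof.
have := N_tri z (fun k => -1 * z k).
rewrite N_hom cmodN1 mul1r.
rewrite (N_ext (w := fun _ => 0)) ?N0 => [|k]; last by rewrite mulN1r subrr.
move=> h; have : 0 <= N z *+ 2 by rewrite mulr2n.
by rewrite pmulrn_lge0.
Qed.

Lemma N_scale r v : N (fun k => rc r * v k) = `|r| * N v.
Proof. by rewrite N_hom cmod_rc. Qed.

Lemma N_sum (I : Type) (s : seq I) (P : pred I) (u : I -> 'I_n -> R[i]) :
  N (fun k => \sum_(i <- s | P i) u i k) <= \sum_(i <- s | P i) N (u i).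
Proof.
elim: s => [|x s IH].
  by rewrite big_nil (N_ext (w:=fun _ => 0)) ?N0 // => k; rewrite big_nil.
rewrite big_cons; case: ifP => Px.
  rewrite (N_ext (w := fun k => u x k + \sum_(i <- s | P i) u i k)) => [|k];
    last by rewrite big_cons Px.
  by apply: le_trans (N_tri _ _) _; rewrite lerD2l.
by rewrite (N_ext (w := fun k => \sum_(i <- s | P i) u i k)) // => k; rewrite big_cons Px.
Qed.

Lemma N_abs y : N (fun k => rc (cmod (y k))) = N y.
Proof. by apply: N_ext => k; rewrite cmod_rc ger0_norm // cmod_ge0. Qed.

Definition ej (j : 'I_n) : 'I_n -> R[i] := fun k => if k == j then 1 else 0.

Lemma N_ej_pos j : 0 < N (ej j).
Proof.
rewrite lt_neqAle N_ge0 andbT; apply/eqP => /esym h.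
case: hN => h0 _ _; have := h0 _ h j; rewrite /ej eqxx => /eqP.
by rewrite oner_eq0.
Qed.

Lemma cmod_le_N y j : cmod (y j) * N (ej j) <= N y.
Proof.
have <- : N (fun k => rc (cmod (y j)) * ej j k) = cmod (y j) * N (ej j).
  by rewrite N_scale ger0_norm // cmod_ge0.
apply: hlat => k; rewrite cmodM cmod_rc ger0_norm ?cmod_ge0 // /ej.
case: eqP => [->|_]; first by rewrite cmod1 mulr1.
by rewrite cmod0 mulr0 cmod_ge0.
Qed.

Lemma cmod_le_N' y j : cmod (y j) <= N y / N (ej j).
Proof. by rewrite ler_pdivlMr ?N_ej_pos // cmod_le_N. Qed.

End Norm.

Lemma ex_perm (T : finType) (A B : {set T}) :
  #|A| = #|B| -> exists s : {perm T}, [set s x | x in A] = B.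
Proof.
move: {2}#|A :\: B| (leqnn #|A :\: B|) => k; elim: k A => [|k IH] A hk hAB.
  have : #|A :\: B| == 0%N by rewrite -leqn0.
  rewrite cards_eq0 finset.setD_eq0 => sAB; exists 1%g; rewrite imset_perm1.
  by apply/eqP; rewrite eqEcard sAB hAB leqnn.
case: (leqP #|A :\: B| k) => [le|gt]; first exact: IH.
have hk1 : #|A :\: B| = k.+1 by apply/eqP; rewrite eqn_leq hk gt.
have [a ha] : exists a, a \in A :\: B.
  by apply/set0Pn; rewrite -card_gt0 hk1.
have [b hb] : exists b, b \in B :\: A.
  apply/set0Pn; rewrite -card_gt0 cardsD finset.setIC -hAB -cardsD hk1 //.
move: ha hb; rewrite !inE => /andP [naB aA] /andP [nbA bB].
pose t := tperm a b.
have cA' : #|[set t x | x in A]| = #|B| by rewrite card_imset //; exact: perm_inj.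
have sub : [set t x | x in A] :\: B \subset (A :\: B) :\ a.
  apply/fintype.subsetP => x; rewrite !inE => /andP [xB /imsetP [y yA xy]]; subst x.
  move: xB; rewrite /t; case: tpermP => [ya|yb|ya yb] xB.
  - by rewrite bB in xB.
  - by rewrite -yb yA in nbA.
  - by rewrite xB yA !andbT; apply/eqP.
have hk' : (#|[set t x | x in A] :\: B| <= k)%N.
  apply: leq_trans (subset_leq_card sub) _.
  have := cardsD1 a (A :\: B); rewrite !inE naB aA /= hk1 add1n => -[<-].
  by [].
have [s' hs'] := IH _ hk' cA'.
exists (t * s')%g; rewrite -hs' -imset_comp; apply: eq_imset => x.
by rewrite permM.
Qed.

Lemma rcD (R : realType) (a b : R) : rc (a + b) = rc a + rc b.
Proof. by rewrite /rc /GRing.add /= addr0. Qed.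
Lemma rc0 (R : realType) : rc (0 : R) = 0. Proof. by []. Qed.
Lemma rc_sum (R : realType) (I : Type) (s : seq I) (P : pred I) (F : I -> R) :
  rc (\sum_(i <- s | P i) F i) = \sum_(i <- s | P i) rc (F i).
Proof. exact: (big_morph _ (@rcD R) (@rc0 R)). Qed.

Section Avg.
Variables (R : realType) (n : nat) (N : ('I_n -> R[i]) -> R).
Hypotheses (hN : is_norm N) (hlat : is_lattice_norm N) (hsym : is_symmetric_norm N).

Lemma count_sum (G : {set {perm 'I_n}}) (B : {set 'I_n}) (k : 'I_n) (F : 'I_n -> R) :
  (forall s, s \in G -> s k \in B) ->
  \sum_(s in G) F (s k) = \sum_(j in B) F j *+ #|[set s in G | s k == j]|.
Proof.
move=> GB.
rewrite (partition_big (fun s : {perm 'I_n} => s k) (mem B)) //=.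
apply: eq_bigr => j jB.
rewrite (eq_big (mem [set s in G | s k == j]) (fun _ => F j)).
- by rewrite sumr_const.
- by move=> s; rewrite !inE; reflexivity.
- by move=> s /andP [_ /eqP ->].
Qed.

Lemma averaging (y : 'I_n -> R[i]) (A B : {set 'I_n}) (m : nat) :
  #|A| = m.+1 -> #|B| = m.+1 ->
  N (fun k => if k \in A then rc ((\sum_(j in B) cmod (y j)) / m.+1%:R) else 0) <= N y.
Proof.
move=> hA hB.
pose x := fun j => cmod (y j).
pose G := [set s : {perm 'I_n} | [set s x | x in A] == B].
have [s0 hs0] := ex_perm (A:=A) (B:=B) (etrans hA (esym hB)).
have G0 : s0 \in G by rewrite inE hs0.
have GB : forall s k, s \in G -> k \in A -> s k \in B.
  by move=> s k; rewrite inE => /eqP <- kA; apply: imset_f.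
have cnt : forall k j j', k \in A -> j \in B -> j' \in B ->
    (#|[set s in G | s k == j]| <= #|[set s in G | s k == j']|)%N.
  move=> k j j' kA jB j'B; pose t := tperm j j'.
  rewrite -(card_imset _ (@mulIg _ t)).
  apply: subset_leq_card; apply/fintype.subsetP => s' /imsetP [s].
  rewrite !inE => /andP [sG /eqP skj] ->.
  rewrite permM skj /t tpermL eqxx andbT.
  have tB : [set t x | x in B] = B.
    apply: im_perm_on; rewrite /perm_on; apply: fintype.subset_trans (tperm_on j j') _.
    by apply/fintype.subsetP => z; rewrite !inE => /orP [] /eqP ->.
  move: sG => /eqP sAB.
  rewrite -[X in _ == X]tB -sAB -imset_comp; apply/eqP; apply: eq_imset => z.
  by rewrite permM.
have avg : forall k, k \in A ->
    \sum_(s in G) x (s k) = #|G|%:R / m.+1%:R * \sum_(j in B) x j.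
  move=> k kA.
  have sB : s0 k \in B by apply: GB.
  pose c := #|[set s in G | s k == s0 k]|.
  have cE : forall j, j \in B -> #|[set s in G | s k == j]| = c.
    by move=> j jB; apply/eqP; rewrite eqn_leq !cnt.
  have GE : #|G|%:R = m.+1%:R * c%:R :> R.
    have := @count_sum G B k (fun _ => 1) (fun s sG => GB s k sG kA).
    rewrite sumr_const => ->.
    rewrite (eq_bigr (fun _ => c%:R)) => [|j jB]; last by rewrite cE.
    by rewrite sumr_const hB mulr_natl.
  rewrite (@count_sum G B); last by move=> s sG; apply: GB.
  rewrite (eq_bigr (fun j => x j * c%:R)) => [|j jB]; last by rewrite cE //; exact: (esym (mulr_natr _ _)).
  rewrite -mulr_suml GE [RHS]mulrC; congr (_ * _).
  by rewrite [RHS]mulrC mulKf ?pnatr_eq0.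
pose g := #|G|%:R : R.
have gpos : 0 < g by rewrite ltr0n card_gt0; apply/set0Pn; exists s0.
pose u := fun (s : {perm 'I_n}) k => if k \in A then rc (x (s k)) else 0.
pose v := fun k => \sum_(s in G) rc g^-1 * u s k.
have Nv : N v <= N y.
  apply: le_trans (N_sum hN hlat _ _ _) _.
  rewrite (eq_bigr (fun s => g^-1 * N (u s))) => [|s _]; last first.
    by rewrite N_scale // ger0_norm // invr_ge0 ltW.
  apply: (@le_trans _ _ (\sum_(s in G) g^-1 * N y)).
    apply: ler_sum => s _; apply: ler_wpM2l; first by rewrite invr_ge0 ltW.
    rewrite -(hsym s y); apply: hlat => k; rewrite /u.
    case: ifP => _; last by rewrite cmod0 cmod_ge0.
    by rewrite cmod_rc ger0_norm // cmod_ge0.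
  by rewrite sumr_const -mulr_natl mulrA divff ?mul1r // gt_eqF.
apply: le_trans Nv; apply: hlat => k; rewrite /v /u.
case: ifP => kA; last first.
  rewrite cmod0 (eq_bigr (fun _ => 0)) ?big1 ?cmod0 // => s _.
  by rewrite mulr0.
rewrite (eq_bigr (fun s : {perm 'I_n} => rc (g^-1 * x (s k)))) => [|s _]; last by rewrite rcM.
rewrite -rc_sum -mulr_sumr avg // mulrA mulrA mulVf ?gt_eqF // mul1r.
by rewrite mulrC.
Qed.

End Avg.

Section Real.
Variable R : realType.

Lemma bern (t : R) q : 0 <= t <= 1 -> 1 - q%:R * (1 - t) <= t ^+ q.
Proof.
move=> /andP [t0 t1]; elim: q => [|q IH]; first by rewrite mul0r subr0 expr0.
rewrite exprS.
apply: (@le_trans _ _ (t * (1 - q%:R * (1 - t)))); last by rewrite ler_wpM2l.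
have q0 : 0 <= q%:R :> R by rewrite ler0n.
have := mulr_ge0 q0 (sqr_ge0 (1-t)).
rewrite -natr1; nra.
Qed.

Lemma lim_le (c M : R) q : 0 <= c ->
  (forall t, 0 < t < 1 -> t ^+ q * c <= M) -> c <= M.
Proof.
move=> c0 H.
have M0 : 0 <= M.
  apply: le_trans (H 2^-1 _); first by rewrite mulr_ge0 // exprn_ge0 // invr_ge0.
  by rewrite invr_gt0 ltr0n /= invf_lt1 // ltr1n.
rewrite leNgt; apply/negP => hMc.
pose D := (q%:R + 1) * (c + 1).
have D0 : 0 < D by rewrite mulr_gt0 // ltr_wpDl // ?ler0n // ltr_wpDl.
pose d := (c - M) / D.
have d0 : 0 < d by rewrite divr_gt0 // subr_gt0.
have dc : d * c <= c - M.
  rewrite /d mulrAC ler_pdivrMr // ler_wpM2l ?subr_ge0 ?ltW //.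
  rewrite /D; have q0 : 0 <= q%:R :> R by rewrite ler0n. nra.
have d1 : d < 1.
  rewrite /d ltr_pdivrMr // mul1r /D; have q0 : 0 <= q%:R :> R by rewrite ler0n. nra.
have := H (1 - d); rewrite subr_gt0 d1 /= ltrBlDr ltrDl d0 => /(_ isT) h.
have := bern q (_ : 0 <= 1 - d <= 1); rewrite subr_ge0 ltW //= lerBlDr lerDl ltW // => /(_ isT).
have e1 : 1 - (1 - d) = d by ring.
rewrite e1 => hb.
have h2 : (1 - q%:R * d) * c <= M.
  by apply: le_trans h; rewrite ler_wpM2r.
have q0 : 0 <= q%:R :> R by rewrite ler0n.
have : q%:R * (d * c) < c - M.
  have e : q%:R * (d * c) = (c - M) * (q%:R * c / D) by rewrite /d; ring.
  rewrite e gtr_pMr ?subr_gt0 // ltr_pdivrMr // mul1r /D; nra.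
nra.
Qed.

Lemma ler_sum_sub (T : finType) (J : {pred T}) (F : T -> R) :
  (forall A, 0 <= F A) -> \sum_(A in J) F A <= \sum_A F A.
Proof.
move=> F0; rewrite [X in _ <= X](bigID (mem J)) /= lerDl sumr_ge0 //.
Qed.

Lemma esym_bound n (x : 'I_n -> R) (tau : R) (J : {set {set 'I_n}}) m :
  (forall k, 0 <= x k) -> 0 <= tau -> (forall A, A \in J -> #|A| = m) ->
  tau ^+ m * \sum_(A in J) \prod_(k in A) x k <= expR (tau * \sum_k x k).
Proof.
move=> x0 t0 hJ.
rewrite mulr_sumr.
rewrite (eq_bigr (fun A : {set 'I_n} => \prod_(k in A) (tau * x k))) => [|A AJ]; last first.
  by rewrite big_split /= prodr_const hJ.
apply: le_trans (ler_sum_sub _ _) _ => [A|]; first by apply: prodr_ge0 => k _; rewrite mulr_ge0.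
apply: (@le_trans _ _ (\prod_k (tau * x k + 1))).
  rewrite bigA_distr; apply: ler_sum => A _.
  by rewrite -big_mkcond.
rewrite mulr_sumr expR_sum; apply: ler_prod => k _.
by rewrite addr_ge0 ?mulr_ge0 //= addrC expR_ge1Dx.
Qed.

End Real.

Section Main.
Variables (R : realType) (n : nat) (N : ('I_n -> R[i]) -> R).
Hypotheses (hN : is_norm N) (hlat : is_lattice_norm N) (hsym : is_symmetric_norm N).

Definition Bk (k : nat) : {set 'I_n} := finset (fun j : 'I_n => (j < k)%N).

Lemma card_Bk k : (k <= n)%N -> #|Bk k| = k.
Proof.
move=> hk.
have -> : Bk k = [set widen_ord hk i | i in 'I_k].
  apply/setP => j; rewrite inE; apply/idP/imsetP => [jk|[i _ ->] /=].
    by exists (Ordinal jk) => //; apply: val_inj.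
  exact: ltn_ord.
rewrite card_imset ?card_ord // => a b /(congr1 val) /= ab; exact: val_inj.
Qed.

Lemma kothe_elt k (y : 'I_n -> R[i]) :
  \sum_j cmod ((fun j : 'I_n => if (j < k)%N then 1 else 0) j * y j)
  = \sum_(j in Bk k) cmod (y j).
Proof.
rewrite [RHS]big_mkcond; apply: eq_bigr => j _; rewrite inE /=.
by case: ifP => _; rewrite ?mul1r ?mul0r ?cmod0.
Qed.

Definition Kb : R := \sum_j (N (@ej R n j))^-1.

Lemma sum_cmod_le (y : 'I_n -> R[i]) : N y <= 1 -> \sum_j cmod (y j) <= Kb.
Proof.
move=> Ny; apply: ler_sum => j _.
apply: le_trans (cmod_le_N' hN hlat y j) _.
by rewrite -[X in _ <= X]mul1r ler_pM2r ?invr_gt0 ?N_ej_pos.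
Qed.

Lemma phi_set_ub k : has_ubound
  [set r | exists y, N y <= 1 /\ r = \sum_j cmod ((fun j : 'I_n => if (j < k)%N then 1 else 0) j * y j)].
Proof.
exists Kb => r [y [Ny ->]]; rewrite kothe_elt.
apply: le_trans (sum_cmod_le Ny).
by rewrite [X in _ <= X](bigID (mem (Bk k))) /= lerDl sumr_ge0 // => j _; rewrite cmod_ge0.
Qed.

Lemma phi_set_n0 k :
  ([set r | exists y, N y <= 1 /\ r = \sum_j cmod ((fun j : 'I_n => if (j < k)%N then 1 else 0) j * y j)] !=set0)%classic.
Proof. by exists (\sum_j cmod ((fun j : 'I_n => if (j < k)%N then 1 else 0) j * 0)); exists (fun _ => 0); rewrite N0. Qed.

Lemma phi_ge k y : N y <= 1 -> \sum_(j in Bk k) cmod (y j) <= phi_dual N k.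
Proof.
move=> Ny; rewrite /phi_dual /kothe_norm; apply: ub_le_sup; first exact: phi_set_ub.
by exists y; split => //; rewrite kothe_elt.
Qed.

Lemma sum_ge_term (T : finType) (B : {pred T}) (F : T -> R) j0 :
  j0 \in B -> (forall j, 0 <= F j) -> F j0 <= \sum_(j in B) F j.
Proof. by move=> jB F0; rewrite (bigD1 j0) //= lerDl sumr_ge0. Qed.

Lemma phi_pos k : (0 < k)%N -> (k <= n)%N -> 0 < phi_dual N k.
Proof.
move=> k0 kn.
have n0 : (0 < n)%N by apply: leq_trans kn.
pose j0 : 'I_n := Ordinal n0.
pose y := fun j => rc (N (@ej R n j0))^-1 * @ej R n j0 j.
have Ny : N y <= 1.
  rewrite /y N_scale // ger0_norm; last by rewrite invr_ge0 ltW ?N_ej_pos.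
  by rewrite mulVf ?gt_eqF ?N_ej_pos.
apply: lt_le_trans (phi_ge k Ny).
apply: lt_le_trans (sum_ge_term (j0 := j0) _ _); last by move=> j; exact: cmod_ge0.
  by rewrite /y /ej eqxx mulr1 cmod_rc ger0_norm ?invr_gt0 ?N_ej_pos // ltW ?invr_gt0 ?N_ej_pos.
by rewrite inE.
Qed.

Lemma monom_set_ub (A : {set 'I_n}) :
  has_ubound [set r | exists z, N z < 1 /\ r = cmod (monom A z)].
Proof.
exists (\prod_(k in A) (N (@ej R n k))^-1) => r [z [Nz ->]].
rewrite /monom cmod_prod; apply: ler_prod => k _; rewrite cmod_ge0 /=.
apply: le_trans (cmod_le_N' hN hlat z k) _.
by rewrite -[X in _ <= X]mul1r ler_pM2r ?invr_gt0 ?N_ej_pos // ltW.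
Qed.

Lemma cX_bound (A : {set 'I_n}) m : #|A| = m -> (m <= n)%N ->
  cX N A <= (m%:R / phi_dual N m) ^+ m.
Proof.
move=> hA hm; rewrite /cX.
set S := [set r | exists z, N z < 1 /\ r = cmod (monom A z)]%classic.
have S0 : forall z, N z < 1 -> cmod (monom A z) <= sup S.
  by move=> z Nz; apply: ub_le_sup; [exact: monom_set_ub | exists z].
case: m hA hm => [|p] hA hm.
  rewrite expr0.
  have A0 : A = finset.set0 by apply/eqP; rewrite -cards_eq0 hA.
  have h0 : N (fun _ : 'I_n => 0 : R[i]) < 1 by rewrite N0 // ltr01.
  have := S0 _ h0; rewrite /monom A0 big_set0 cmod1 => h.
  by rewrite ler_pdivrMr ?mul1r // (lt_le_trans ltr01).
set a := phi_dual N p.+1.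
have a0 : 0 < a by apply: phi_pos.
set P := (a / p.+1%:R) ^+ p.+1.
have P0 : 0 < P by rewrite exprn_gt0 // divr_gt0.
have PS : P <= sup S.
  apply: (@lim_le _ _ _ (p.+1 * 2)); first exact: ltW.
  move=> t /andP [t0 t1].
  have ta : t * a < a by rewrite gtr_pMl.
  have [r [y [Ny ->]] hr] := sup_gt (phi_set_n0 p.+1) ta.
  rewrite kothe_elt in hr.
  set r' := \sum_(j in Bk p.+1) cmod (y j) in hr.
  have Nw := averaging hN hlat hsym y hA (card_Bk hm).
  set w := fun k => _ in Nw.
  have Nz : N (fun k => rc t * w k) < 1.
    have Nw1 : N w <= 1 := le_trans Nw Ny.
    rewrite N_scale // (ger0_norm (ltW t0)).
    apply: le_lt_trans t1; rewrite -[X in _ <= X]mulr1; apply: ler_wpM2l => //.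
    exact: ltW.
  apply: le_trans (S0 _ Nz).
  rewrite /monom cmod_prod (eq_bigr (fun _ => t * (r' / p.+1%:R))) => [|k kA]; last first.
    rewrite /w kA cmodM !cmod_rc (ger0_norm (ltW t0)) ger0_norm //.
    apply: divr_ge0 => //; apply: sumr_ge0 => j _; exact: cmod_ge0.
  rewrite prodr_const hA /P [(p.+1 * 2)%N]mulnC exprM -exprMn.
  have t0' : 0 <= t := ltW t0.
  have a0' : 0 <= a := ltW a0.
  have r0 : 0 <= r' := le_trans (mulr_ge0 t0' a0') (ltW hr).
  apply: lerXn2r; rewrite ?nnegrE.
  - apply: mulr_ge0; [exact: exprn_ge0 | exact: divr_ge0].
  - apply: mulr_ge0 => //; exact: divr_ge0.
  rewrite expr2 -mulrA; apply: ler_wpM2l => //.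
  rewrite !mulrA; apply: ler_wpM2r; [by rewrite invr_ge0 | exact: ltW hr].
have SP : 0 < sup S := lt_le_trans P0 PS.
have Q : (p.+1%:R / a) ^+ p.+1 = P^-1 by rewrite /P -exprVn invf_div.
by rewrite mul1r Q lef_pV2 ?posrE.
Qed.

End Main.

Unset Implicit Arguments.
Set Strict Implicit.

Theorem corollary2p20 (R : realType) (n m : nat) (N : ('I_n -> R[i]) -> R)
  (hN : is_norm N) (hlat : is_lattice_norm N) (hsym : is_symmetric_norm N)
  (hmn : (m <= n)%N) (J : {set {set 'I_n}})
  (hJ : forall A, A \in J -> #|A| = m) :
  lambda_hat N J <= expR 1 ^+ m * (phi_dual N n / phi_dual N m) ^+ m.
Proof.
rewrite /lambda_hat; apply: ge_sup.
  exists (\sum_(A in J) cX N A * cmod (monom A (fun _ => 0))).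
  by exists (fun _ => 0); split => //; rewrite N0 // ltr01.
move=> r [z [Nz ->]].
pose x := fun k => cmod (z k).
have x0 : forall k, 0 <= x k by move=> k; exact: cmod_ge0.
pose eJ := \sum_(A in J) \prod_(k in A) x k.
have step1 : \sum_(A in J) cX N A * cmod (monom A z) <= (m%:R / phi_dual N m) ^+ m * eJ.
  rewrite /eJ mulr_sumr; apply: ler_sum => A AJ.
  rewrite /monom cmod_prod mulrC [X in _ <= X]mulrC; apply: ler_wpM2l.
    by apply: prodr_ge0 => k _; exact: x0.
  exact: (cX_bound hN hlat hsym (hJ A AJ) hmn).
apply: le_trans step1 _.
case: m hmn hJ => [|p] hmn hJ.
  rewrite !expr0 !mul1r.
  have := esym_bound x0 (lexx 0) hJ.
  by rewrite expr0 mul1r mul0r expR0.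
set a := phi_dual N p.+1.
set b := phi_dual N n.
have n0 : (0 < n)%N by apply: leq_trans hmn.
have a0 : 0 < a by apply: phi_pos.
have b0 : 0 < b by apply: phi_pos.
have sb : \sum_k x k <= b.
  have := phi_ge hN hlat n (ltW Nz).
  by rewrite (eq_bigl predT) // => j; rewrite inE ltn_ord.
pose tau := p.+1%:R / b.
have tau0 : 0 < tau by rewrite divr_gt0.
have hE : tau ^+ p.+1 * eJ <= expR 1 ^+ p.+1.
  apply: le_trans (esym_bound x0 (ltW tau0) hJ) _.
  rewrite -expRM_natl ler_expR mulr1.
  apply: le_trans (ler_wpM2l (ltW tau0) sb) _.
  by rewrite /tau divfK ?gt_eqF.
have heJ : eJ <= expR 1 ^+ p.+1 / tau ^+ p.+1.
  by rewrite ler_pdivlMr ?exprn_gt0 // mulrC.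
set C := (p.+1%:R / a) ^+ p.+1.
have C0 : 0 <= C by rewrite exprn_ge0 // divr_ge0 // ltW.
have Hct : C / tau ^+ p.+1 = (b / a) ^+ p.+1.
  rewrite /C /tau -expr_div_n; congr (_ ^+ _); field.
  apply/and3P; split; rewrite gt_eqF //.
  have := ler0n R p; lra.
apply: le_trans (ler_wpM2l C0 heJ) _.
by rewrite -Hct le_eqVlt; apply/orP; left; apply/eqP; ring.
Qed.
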